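(* Let $\Pi$ be a finite projective plane and let $\mathcal{S}$ be a semioval in $\Pi$. Suppose that $\mathcal{T}\subset\mathcal{S}$ is a pointset with the property that for every line $\ell$ which is a secant line to $\mathcal{S}$ (i.e. $|\mathcal{S}\cap\ell|\geq 2$) the inequality $|\mathcal{S}\cap\ell|\geq|\mathcal{T}\cap\ell|+2$ holds. Then $\mathcal{S}\setminus\mathcal{T}$ is a semioval, and $\mathcal{S}$ contains semiovals of size $k$ for every integer $k$ satisfying $|\mathcal{S}\setminus\mathcal{T}|\leq k\leq|\mathcal{S}|$.
   Context: A semioval in a projective plane is a non-empty pointset $\mathcal{S}$ such that for every point $P\in\mathcal{S}$ there is a unique line $t_P$ with $\mathcal{S}\cap t_P=\{P\}$ (the tangent line at $P$). *)

(* Defs.v *)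
From mathcomp Require Import all_boot.
Set Implicit Arguments. Unset Strict Implicit. Unset Printing Implicit Defensive.

Definition on_line (Pt Ln : finType) (inc : Pt -> Ln -> bool)
  (A : {set Pt}) (l : Ln) : {set Pt} := [set p in A | inc p l].

Definition projective_plane (Pt Ln : finType) (inc : Pt -> Ln -> bool) : Prop :=
  (forall p q : Pt, p != q -> exists! l : Ln, inc p l && inc q l) /\
  (forall l m : Ln, l != m -> exists! p : Pt, inc p l && inc p m) /\
  (exists (a b c d : Pt), uniq [:: a; b; c; d] /\
     forall l : Ln, #|[set x in [:: a; b; c; d] | inc x l]| <= 2).

Definition semioval (Pt Ln : finType) (inc : Pt -> Ln -> bool) (S : {set Pt}) : Prop :=
  S != set0 /\
  forall p, p \in S -> exists! t : Ln, on_line inc S t = [set p].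

(* Main.v *)
Require Import Defs.
From mathcomp Require Import all_boot.

Section S.
Variables (Pt Ln : finType) (inc : Pt -> Ln -> bool).

Lemma on_line_sub (A B : {set Pt}) l : A \subset B -> on_line inc A l \subset on_line inc B l.
Proof. move=> AB; apply/subsetP=> x; rewrite !inE => /andP[/(subsetP AB) -> ->] //. Qed.

Lemma between (S T S' : {set Pt}) :
  semioval inc S -> T \subset S ->
  (forall l : Ln, 2 <= #|on_line inc S l| ->
     #|on_line inc T l| + 2 <= #|on_line inc S l|) ->
  S :\: T \subset S' -> S' \subset S -> S' != set0 -> semioval inc S'.
Proof.
move=> [_ HS] TS HT lo hi ne; split=> // p pS'.
have pS : p \in S by apply: (subsetP hi).
have [t [Ht Hu]] := HS p pS.
exists t; split.
  apply/eqP; rewrite eqEcard cards1; apply/andP; split.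
    by rewrite -Ht; apply: on_line_sub.
  have : p \in on_line inc S' t.
    have : p \in on_line inc S t by rewrite Ht set11.
    by rewrite !inE pS' => /andP[_ ->].
  by move=> pin; rewrite card_gt0; apply/set0Pn; exists p.
move=> t' Ht'; apply: Hu.
have pin : p \in on_line inc S t'.
  have : p \in on_line inc S' t' by rewrite Ht' set11.
  by rewrite !inE pS => /andP[_ ->].
have sub : on_line inc S t' \subset on_line inc S' t' :|: on_line inc T t'.
  apply/subsetP=> x; rewrite !inE => /andP[xS ->]; rewrite !andbT.
  case xT: (x \in T); first by rewrite orbT.
  by rewrite (subsetP lo) //= inE xT xS.
have le1 : #|on_line inc S t'| <= 1.
  case: (leqP 2 #|on_line inc S t'|) => // h2.
  have := HT _ h2.
  have := subset_leq_card sub; rewrite cardsU Ht' cards1 => h.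
  move=> h'; exfalso; move: h h'; set a := #|on_line inc T t'|; set b := #|_ :&: _|.
  set c := #|on_line inc S t'|. move=> h h'.
  have : c <= 1 + a by apply: (leq_trans h); apply: leq_subr.
  by move=> h''; have := leq_trans h' h''; rewrite addnC ltnn.
apply/eqP; rewrite eq_sym eqEcard cards1 le1 andbT sub1set pin //.
Qed.
End S.

Lemma subset_card (X : finType) (B : {set X}) m : m <= #|B| -> exists A : {set X}, A \subset B /\ #|A| = m.
Proof.
move=> hm; exists [set x in take m (enum B)]; split.
  by apply/subsetP=> x; rewrite inE => /mem_take; rewrite mem_enum.
rewrite cardsE; rewrite (card_uniqP _); last by apply: take_uniq; apply: enum_uniq.
by rewrite size_take -cardE; case: ltngtP hm.
Qed.

Theorem mainTheorem1 (Pt Ln : finType) (inc : Pt -> Ln -> bool)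
  (Hpp : projective_plane inc) (S T : {set Pt}) :
  semioval inc S -> T \subset S ->
  (forall l : Ln, 2 <= #|on_line inc S l| ->
     #|on_line inc T l| + 2 <= #|on_line inc S l|) ->
  semioval inc (S :\: T) /\
  (forall k : nat, #|S :\: T| <= k <= #|S| ->
     exists S' : {set Pt}, [/\ S' \subset S, #|S'| = k & semioval inc S']).
Proof.
move=> HS TS HT.
have ne : S :\: T != set0.
  have [/set0Pn [p pS] HSt] := HS.
  have [t [Ht _]] := HSt p pS.
  have [l [lp lt]] : exists l, inc p l /\ l != t.
    have [H1 [_ [a [b [c [d [U H4]]]]]]] := Hpp.
    have key : forall w, w \in [:: a; b; c; d] -> w != p -> ~~ inc w t -> exists l, inc p l /\ l != t.
      move=> w _ wp wt; have [l [/andP[lp lw] _]] := H1 p w (ltac:(by rewrite eq_sym)).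
      by exists l; split => //; apply: contraNneq wt => <-.
    case: (boolP [exists w, (w \in [:: a; b; c; d]) && (w != p) && ~~ inc w t]).
      by move=> /existsP[w /andP[/andP[h1 h2] h3]]; exact: key w h1 h2 h3.
    rewrite negb_exists => /forallP Hall.
    have Hw : forall w, w \in [:: a; b; c; d] -> w != p -> inc w t.
      by move=> w h1 h2; have := Hall w; rewrite h1 h2 /= negbK.
    have := H4 t.
    have sub : [set x in [:: a; b; c; d] | x != p] \subset [set x in [:: a; b; c; d] | inc x t].
      by apply/subsetP=> x; rewrite !inE => /andP[h1 h2]; rewrite h1 (Hw x ltac:(by rewrite !inE) h2).
    move=> h; have := leq_trans (subset_leq_card sub) h.
    have : #|[set x in [:: a; b; c; d]]| = 4.
      by rewrite cardsE; apply/card_uniqP.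
    have := cardsID [set p] [set x in [:: a; b; c; d]].
    have -> : [set x in [:: a; b; c; d] | x != p] = [set x in [:: a; b; c; d]] :\: [set p].
      by apply/setP=> x; rewrite !inE andbC.
    move=> e e4 h2.
    have : #|[set x in [:: a; b; c; d]] :&: [set p]| <= 1.
      by rewrite -(cards1 p); apply: subset_leq_card; apply: subsetIr.
    move=> h1; move: e; rewrite e4; move: h1 h2.
    set u := #|_ :&: _|; set v := #|_ :\: _|.
    move=> h1 h2 e; exfalso.
    have : u + v <= 3 by apply: leq_add h1 h2.
    by rewrite e.
  have sec : 2 <= #|on_line inc S l|.
    case: (leqP 2 #|on_line inc S l|) => // h1; exfalso.
    have pin : p \in on_line inc S l by rewrite inE pS lp.
    have : on_line inc S l = [set p].
      apply/eqP; rewrite eq_sym eqEcard cards1 sub1set pin /=; by rewrite -ltnS.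
    move=> E; have [t' [_ Hu]] := HSt p pS.
    have := Hu l E; have := Hu t Ht. by move=> -> e; rewrite e eqxx in lt.
  have := HT l sec.
  apply: contraTneq => E.
  have sub : on_line inc S l \subset on_line inc T l.
    apply/subsetP=> x; rewrite !inE => /andP[xS ->]; rewrite andbT.
    apply: contraT => xT.
    have : x \in S :\: T by rewrite inE xT xS.
    by rewrite E inE.
  have := subset_leq_card sub => h.
  rewrite -ltnNge; apply: leq_ltn_trans h _. rewrite addn2. by [].
split; first by apply: (@between Pt Ln inc S T _ HS TS HT) => //; apply: subsetDl.
move=> k /andP[k1 k2].
have eS : #|S| = #|T| + #|S :\: T|.
  by rewrite -(cardsID T S) (setIidPr TS).
have [A [AT cA]] := @subset_card Pt T (k - #|S :\: T|) (ltac:(by rewrite leq_subLR addnC -eS)).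
exists ((S :\: T) :|: A); split.
- by rewrite subUset subsetDl (subset_trans AT TS).
- have : (S :\: T) :&: A = set0.
    apply/setP=> x; rewrite !inE; case xA: (x \in A); last by rewrite andbF.
    by rewrite (subsetP AT x xA).
  by move=> e; rewrite cardsU e cards0 subn0 cA subnKC.
- apply: (@between Pt Ln inc S T _ HS TS HT).
  + exact: subsetUl.
  + by rewrite subUset subsetDl (subset_trans AT TS).
  + by apply: contraNneq ne => /eqP; rewrite setU_eq0 => /andP[/eqP -> _].
Qed.
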